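(* Let $p$ be an odd prime. Then \[ \sum_{k=0}^{p-1}k\frac{(\frac{1}{p+1})_k^{p+1}}{k!^{p+1}}\equiv 0\pmod{p^3}. \]
   Context: $(a)_k=a(a+1)\cdots(a+k-1)$ is the Pochhammer symbol, with $(a)_0=1$. The congruence is between $p$-integral rational numbers: it means that the sum, a rational number whose denominator is coprime to $p$, has numerator divisible by $p^3$. *)

(* Defs.v *)
From mathcomp Require Import all_boot all_order all_algebra.
Set Implicit Arguments. Unset Strict Implicit. Unset Printing Implicit Defensive.
Import Order.TTheory GRing.Theory Num.Theory.
Local Open Scope ring_scope.

Definition poch (a : rat) (k : nat) : rat := \prod_(i < k) (a + i%:R).

(* x is a p-integral rational whose numerator is divisible by p^e,
   i.e. x == 0 (mod p^e) in Z_(p). *)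
Definition rat_cong0 (p e : nat) (x : rat) : Prop :=
  ~~ (p %| `|denq x|)%N /\ ((p ^ e)%:Z %| numq x)%Z.

(* Main.v *)
Require Import Defs.
From mathcomp Require Import all_boot all_order all_algebra.
From mathcomp Require Import ring lra zify.
Import GRing.Theory Num.Theory.
Local Open Scope ring_scope.

Definition good (p e : nat) (x : rat) := exists (n : int) (d : nat),
  ~~ (p %| d)%N /\ x = (p ^ e)%:R * n%:~R / d%:R.

Lemma ndvd_neq0 {p d} : ~~ (p %| d)%N -> d%:R != 0 :> rat.
Proof. by move=> h; rewrite pnatr_eq0; apply: contraNneq h => ->; rewrite dvdn0. Qed.

Lemma good_cong p e x : prime p -> good p e x ->
  ~~ (p %| `|denq x|)%N /\ ((p ^ e)%:Z %| numq x)%Z.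
Proof.
move=> pp [n [d [hd ->]]].
set y := _ / _.
have dn0 := ndvd_neq0 hd.
have E : numq y * d%:Z = (p ^ e)%:Z * n * denq y.
  apply: (@intr_inj rat).
  have dq0 : (denq y)%:~R != 0 :> rat by rewrite intr_eq0 denq_neq0.
  have h2 : (numq y)%:~R = y * (denq y)%:~R :> rat.
    by rewrite -{2}(divq_num_den y) mulfVK.
  rewrite !rmorphM /= h2 /y. rewrite !pmulrn /=. field. done.
have E' : (`|numq y| * d = p ^ e * `|n| * `|denq y|)%N.
  by have := congr1 absz E; rewrite !abszM.
have cop := coprime_num_den y.
have cop' : coprime `|denq y| `|numq y| by rewrite coprime_sym.
split.
  have : (`|denq y| %| d)%N.
    rewrite -(Gauss_dvdr d (cop')) E'.
    exact: dvdn_mull.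
  by move=> h1; apply: contra hd => h2; apply: dvdn_trans h2 h1.
rewrite /dvdz /=.
suff h : (p ^ e %| `|numq y|)%N by exact: h.
have cp : coprime (p ^ e) d.
  case: (e) => [|e']; first by rewrite coprime1n.
  by rewrite coprime_pexpl // prime_coprime.
rewrite -(Gauss_dvdl `|numq y| cp) E' -mulnA.
exact: dvdn_mulr.
Qed.

Lemma ndvdM p a b : prime p -> ~~ (p %| a)%N -> ~~ (p %| b)%N -> ~~ (p %| a * b)%N.
Proof. by move=> pp ha hb; rewrite Euclid_dvdM // negb_or ha hb. Qed.

Lemma good_add p e x y : prime p -> good p e x -> good p e y -> good p e (x + y).
Proof.
move=> pp [n [d [hd ->]]] [n' [d' [hd' ->]]].
exists (n * d'%:Z + n' * d%:Z), (d * d')%N; split; first exact: ndvdM.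
have := ndvd_neq0 hd; have := ndvd_neq0 hd' => h1 h2.
rewrite natrM rmorphD !rmorphM /=. field. by rewrite h1 h2.
Qed.

Lemma good_opp p e x : good p e x -> good p e (- x).
Proof.
move=> [n [d [hd ->]]]; exists (- n), d; split => //.
by rewrite rmorphN /= mulrN mulNr.
Qed.

Lemma good_sub p e x y : prime p -> good p e x -> good p e y -> good p e (x - y).
Proof. by move=> pp hx hy; apply: good_add => //; apply: good_opp. Qed.

Lemma good_mul p e f x y : prime p -> good p e x -> good p f y -> good p (e + f) (x * y).
Proof.
move=> pp [n [d [hd ->]]] [n' [d' [hd' ->]]].
exists (n * n'), (d * d')%N; split; first exact: ndvdM.
have := ndvd_neq0 hd; have := ndvd_neq0 hd' => h1 h2.
rewrite natrM rmorphM /= expnD natrM. field. by rewrite h1 h2.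
Qed.

Lemma good_mul0 p e x y : prime p -> good p 0 x -> good p e y -> good p e (x * y).
Proof. by move=> pp hx hy; have := @good_mul _ _ _ _ _ pp hx hy; rewrite add0n. Qed.

Lemma good_mul0r p e x y : prime p -> good p e x -> good p 0 y -> good p e (x * y).
Proof. by move=> pp hx hy; have := @good_mul _ _ _ _ _ pp hx hy; rewrite addn0. Qed.

Lemma good_weak p e f x : (f <= e)%N -> good p e x -> good p f x.
Proof.
move=> hfe [n [d [hd ->]]]; exists (n * (p ^ (e - f))%:Z), d; split => //.
by rewrite rmorphM /= -(subnKC hfe) expnD natrM pmulrn /= subnKC //; ring.
Qed.

Lemma good_int p (n : int) : prime p -> good p 0 n%:~R.
Proof.
move=> pp; exists n, 1%N; split; first by rewrite dvdn1; apply/eqP => h; move: pp; rewrite h.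
by rewrite expn0 mul1r divr1.
Qed.

Lemma good_nat p (n : nat) : prime p -> good p 0 n%:R.
Proof. by move=> pp; have := @good_int p n pp. Qed.

Lemma good_inv p d : ~~ (p %| d)%N -> good p 0 (d%:R)^-1.
Proof. by move=> hd; exists 1, d; split => //; rewrite expn0 mulr1z mulr1 mul1r. Qed.

Lemma good_p p : prime p -> good p 1 p%:R.
Proof. move=> pp; exists 1, 1%N; split; last by rewrite expn1 mulr1 divr1.
by rewrite dvdn1; apply/eqP => h; move: pp; rewrite h. Qed.

Lemma good0 p e : prime p -> good p e 0.
Proof. move=> pp; exists 0, 1%N; split; last by rewrite mulr0 mul0r.
by rewrite dvdn1; apply/eqP => h; move: pp; rewrite h. Qed.

Lemma good_sum p e n (F : 'I_n -> rat) : prime p -> (forall i, good p e (F i)) ->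
  good p e (\sum_(i < n) F i).
Proof. move=> pp h; apply: big_ind => //; [exact: good0 | move=> x y; exact: good_add]. Qed.


Lemma poch0 a : poch a 0 = 1.
Proof. by rewrite /poch big_ord0. Qed.

Lemma poch_recr a k : poch a k.+1 = poch a k * (a + k%:R).
Proof. by rewrite /poch big_ord_recr. Qed.

Lemma poch_recl a k : poch a k.+1 = a * poch (a + 1) k.
Proof.
rewrite /poch big_ord_recl addr0; congr (_ * _); apply: eq_bigr => i _.
by rewrite /= /bump /= natrD addrA addrAC.
Qed.

Lemma ndvd_lt p n : (0 < n)%N -> (n < p)%N -> ~~ (p %| n)%N.
Proof. by move=> n0 np; apply/negP => /(dvdn_leq n0); rewrite leqNgt np. Qed.

Lemma ndvd_fact p n : prime p -> (n < p)%N -> ~~ (p %| n`!)%N.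
Proof.
move=> pp; elim: n => [|n IH] h; first by rewrite dvdn1; apply/eqP => e; move: pp; rewrite e.
rewrite factS; apply: ndvdM => //; first exact: ndvd_lt.
by apply: IH; apply: ltnW.
Qed.

Lemma ndvd_S p : prime p -> ~~ (p %| p.+1)%N.
Proof.
move=> pp; rewrite -addn1 dvdn_addr // dvdn1.
by apply/eqP => e; move: pp; rewrite e.
Qed.

Lemma good_split p e x : good p e.+1 x -> exists y, good p e y /\ x = p%:R * y.
Proof.
move=> [n [d [hd ->]]]; exists ((p ^ e)%:R * n%:~R / d%:R); split.
  by exists n, d.
by rewrite expnS natrM !mulrA.
Qed.

Lemma good_pX p e f z : good p f z -> good p (e + f) (p%:R ^+ e * z).
Proof.
move=> [n [d [hd ->]]]; exists n, d; split => //.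
by rewrite expnD natrM -natrX !mulrA.
Qed.

Lemma good_w0 p e x : good p e x -> good p 0 x.
Proof. exact: good_weak. Qed.

Lemma good_one p : prime p -> good p 0 1.
Proof. by move=> pp; have := @good_nat p 1 pp. Qed.

Lemma xk_cong p k : prime p -> (k < p)%N ->
  good p 1 (poch (p.+1%:R)^-1 k / k`!%:R - 1).
Proof.
move=> pp; elim: k => [|k IH] hk.
  by rewrite poch0 fact0 divr1 subrr; apply: good0.
have hk' : (k < p)%N by apply: ltnW.
set a := (p.+1%:R)^-1.
have p1 : p.+1%:R != 0 :> rat by rewrite pnatr_eq0.
have k1 : k.+1%:R != 0 :> rat by rewrite pnatr_eq0.
have kf : k`!%:R != 0 :> rat by rewrite pnatr_eq0 -lt0n fact_gt0.
set r := (a + k%:R) / k.+1%:R.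
have hr1 : good p 1 (r - 1).
  have -> : r - 1 = p%:R * ((-1) * (p.+1%:R)^-1 * (k.+1%:R)^-1).
    rewrite /r /a. move: p1 k1; rewrite -[k.+1]addn1 -[p.+1]addn1 !natrD => p1 k1.
    field. by rewrite p1 k1.
  rewrite -[1%N]addn0; apply: good_mul => //; first exact: good_p.
  apply: good_mul0 => //; last by apply: good_inv; apply: ndvd_lt.
  apply: good_mul0 => //; last by apply: good_inv; apply: ndvd_S.
  by have := @good_int p (-1) pp.
have hr0 : good p 0 r.
  rewrite -(subrK 1 r); apply: good_add => //; [exact: good_w0 hr1 | exact: good_one].
have -> : poch a k.+1 / k.+1`!%:R - 1 = (poch a k / k`!%:R - 1) * r + (r - 1).
  rewrite poch_recr factS natrM /r. field.
  by rewrite addrC natr1 k1 kf.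
apply: (@good_add p 1 _ _ pp) => //.
 apply: (@good_mul0r p 1 _ _ pp) => //; exact: IH.
Qed.

Lemma pow_exp p y n : prime p -> good p 0 y -> exists w, good p 0 w /\
  (1 + p%:R * y) ^+ n = 1 + n%:R * (p%:R * y) + 'C(n, 2)%:R * (p%:R * y) ^+ 2
     + (p%:R * y) ^+ 3 * w.
Proof.
move=> pp hy; set u := p%:R * y.
have hu : good p 0 u by apply: (@good_mul0 p 0 _ _ pp) => //; exact: good_nat.
elim: n => [|n [w [hw E]]].
  exists 0; split; first exact: good0.
  by rewrite expr0 bin0n !mul0r mulr0 !addr0.
exists ('C(n, 2)%:R + w * (1 + u)); split.
  apply: (@good_add p 0 _ _ pp); first exact: good_nat.
  apply: (@good_mul0 p 0 _ _ pp) => //; apply: (@good_add p 0 _ _ pp) => //; exact: good_one.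
rewrite exprS E binS bin1 natrD -(addn1 n) natrD. ring.
Qed.

Lemma bin2_odd p : odd p -> 'C(p.+1, 2) = (p * (p.+1)./2)%N.
Proof.
move=> ho; rewrite bin2 /=.
have E : p.+1 = ((p.+1)./2).*2.
  by rewrite -{1}(odd_double_half p.+1) /= ho.
by rewrite {1}E -doubleMl half_double mulnC.
Qed.

Lemma step3 p x : prime p -> odd p -> good p 1 (x - 1) ->
  good p 3 (x ^+ p.+1 - (p.+1%:R * x - p%:R)).
Proof.
move=> pp ho /good_split [y [hy E]].
have Ex : x = 1 + p%:R * y by rewrite -E addrC subrK.
have [w [hw E2]] := @pow_exp p y p.+1 pp hy.
rewrite Ex E2 bin2_odd // natrM.
have -> : 1 + p.+1%:R * (p%:R * y) + p%:R * (p.+1)./2%:R * (p%:R * y) ^+ 2 +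
    (p%:R * y) ^+ 3 * w - (p.+1%:R * (1 + p%:R * y) - p%:R)
    = p%:R ^+ 3 * ((p.+1)./2%:R * y ^+ 2 + y ^+ 3 * w).
  rewrite -(addn1 p) natrD. ring.
rewrite -[3%N]addn0; apply: good_pX.
apply: (@good_add p 0 _ _ pp).
  apply: (@good_mul0 p 0 _ _ pp); first exact: good_nat.
  by rewrite expr2; apply: (@good_mul0 p 0 _ _ pp).
apply: (@good_mul0r p 0 _ _ pp) => //.
by rewrite exprS expr2; apply: (@good_mul0 p 0 _ _ pp) => //; apply: (@good_mul0 p 0 _ _ pp).
Qed.

Lemma sum_id a m : \sum_(k < m.+2) k%:R * poch a k / k`!%:R
   = a * poch (a + 2%:R) m / m`!%:R.
Proof.
have E2 : a + 1 + 1 = a + 2%:R by rewrite -addrA.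
elim: m => [|m IH].
  rewrite !big_ord_recr big_ord0 /= poch_recr !poch0 !fact0 /=.
  by rewrite !mul0r add0r addr0 mul1r divr1 mulr1 divr1 mul1r.
rewrite big_ord_recr /= IH (poch_recl a m.+1) (poch_recl (a + 1) m) E2 (poch_recr (a + 2%:R) m) !factS !natrM.
have m1 : m.+1%:R != 0 :> rat by rewrite pnatr_eq0.
have m2 : m.+2%:R != 0 :> rat by rewrite pnatr_eq0.
have mf : m`!%:R != 0 :> rat by rewrite pnatr_eq0 -lt0n fact_gt0.
field.
have -> : (2 + m%:R : rat) = m.+2%:R.
  by rewrite -[m.+2]addn2 natrD addrC.
by rewrite mf addrC natr1 m1 m2.
Qed.

Lemma poch_good0 p a m : prime p -> good p 0 a -> good p 0 (poch a m).
Proof.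
move=> pp ha; elim: m => [|m IH]; first by rewrite poch0; apply: good_one.
rewrite poch_recr; apply: (@good_mul0 p 0 _ _ pp) => //.
apply: (@good_add p 0 _ _ pp) => //; exact: good_nat.
Qed.

Lemma poch_cong p a b m : prime p -> good p 0 a -> good p 0 b -> good p 1 (a - b) ->
  good p 1 (poch a m - poch b m).
Proof.
move=> pp ha hb hab; elim: m => [|m IH]; first by rewrite !poch0 subrr; apply: good0.
rewrite !poch_recr.
have -> : poch a m * (a + m%:R) - poch b m * (b + m%:R) =
  (poch a m - poch b m) * (a + m%:R) + poch b m * (a - b) by ring.
apply: (@good_add p 1 _ _ pp).
  apply: (@good_mul0r p 1 _ _ pp) => //.
  apply: (@good_add p 0 _ _ pp) => //; exact: good_nat.
apply: (@good_mul0 p 1 _ _ pp) => //; exact: poch_good0.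
Qed.

Lemma poch3 m : 2%:R * poch 3%:R m = (m.+2)`!%:R :> rat.
Proof.
elim: m => [|m IH]; first by rewrite poch0 mulr1.
rewrite poch_recr mulrA IH mulrC (factS m.+2) natrM.
by rewrite -[m.+3]addn3 natrD addrC.
Qed.

Lemma sum_nat n : (\sum_(k < n) (k%:R : rat)) * 2%:R = n%:R * (n%:R - 1).
Proof.
elim: n => [|n IH]; first by rewrite big_ord0 !mul0r.
rewrite big_ord_recr /= mulrDl IH -(addn1 n) natrD. ring.
Qed.

Lemma step5 p m : prime p -> p = m.+3 ->
  good p 3 (poch ((p.+1%:R)^-1 + 2%:R) m.+1 / (m.+1)`!%:R
            - p%:R * \sum_(k < p) (k%:R : rat)).
Proof.
move=> pp hpm.
set a := (p.+1%:R)^-1.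
have ha : good p 0 a by apply: good_inv; apply: ndvd_S.
have hF : good p 0 ((m.+1)`!%:R)^-1.
  by apply: good_inv; apply: ndvd_fact => //; rewrite hpm.
have h2 : good p 0 (2%:R)^-1.
  by apply: good_inv; apply: ndvd_lt => //; rewrite hpm.
set D := poch (a + 2%:R) m - poch 3%:R m.
have hD : good p 1 D.
  apply: poch_cong => //.
  - apply: (@good_add p 0 _ _ pp) => //; exact: good_nat.
  - exact: good_nat.
  have -> : a + 2%:R - 3%:R = p%:R * (- a).
    rewrite /a. have p1 : (p%:R + 1 : rat) != 0.
      by rewrite natr1 pnatr_eq0.
    rewrite -natr1. field. exact: p1.
  rewrite -[1%N]addn0; apply: good_mul => //; first exact: good_p.
  exact: good_opp.
have S := sum_nat p.
have P3 := poch3 m.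
have F0 : (m.+1)`!%:R != 0 :> rat by rewrite pnatr_eq0 -lt0n fact_gt0.
have -> : poch (a + 2%:R) m.+1 / (m.+1)`!%:R - p%:R * \sum_(k < p) (k%:R : rat)
   = p%:R ^+ 2 * (D * a * ((m.+1)`!%:R)^-1 + p%:R * (- (m.+2)%:R * (2%:R)^-1 * a)).
  have P3' : poch 3%:R m = (m.+2)%:R * (m.+1)`!%:R / 2%:R.
    have E : (m.+2)%:R * (m.+1)`!%:R = 2%:R * poch 3%:R m :> rat.
      by rewrite P3 (factS m.+1) natrM.
    by rewrite E; field.
  have S' : \sum_(k < p) (k%:R : rat) = p%:R * (p%:R - 1) / 2%:R.
    by rewrite -S; field.
  rewrite poch_recr /D P3' S'.
  move: F0; set F := (m.+1)`!%:R; set P := poch _ m => F0.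
  rewrite /a hpm !mulrS. field.
  apply/andP; split; last exact: F0.
  by rewrite -!mulrS pnatr_eq0.
change (good p (2 + 1) (p%:R ^+ 2 * (D * a / (m.+1)`!%:R + p%:R * (- m.+2%:R / 2%:R * a)))).
apply: good_pX.
apply: (@good_add p 1 _ _ pp).
  apply: (@good_mul0r p 1 _ _ pp) => //.
  by apply: (@good_mul0r p 1 _ _ pp) => //.
rewrite -[1%N]addn0; apply: good_mul => //; first exact: good_p.
apply: (@good_mul0 p 0 _ _ pp) => //.
apply: (@good_mul0 p 0 _ _ pp) => //.
apply: good_opp; exact: good_nat.
Qed.

Theorem corollary1 (p : nat) (hp : prime p) (hodd : odd p) :
  rat_cong0 p 3
    (\sum_(k < p)
       (k%:R * poch (p.+1%:R)^-1 k ^+ p.+1 / (k`!)%:R ^+ p.+1 : rat)).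
Proof.
rewrite /rat_cong0; apply: good_cong => //.
have p2 : (2 < p)%N.
  have := prime_gt1 hp; rewrite leq_eqVlt => /orP [/eqP e|//].
  by move: hodd; rewrite -e.
have hpm : p = (p - 3)%N.+3 by lia.
set m := (p - 3)%N in hpm.
set a := (p.+1%:R)^-1.
set G := \sum_(k < p) (k%:R * (p.+1%:R * (poch a k / k`!%:R) - p%:R) : rat).
have H1 : good p 3 (\sum_(k < p) (k%:R * poch a k ^+ p.+1 / (k`!)%:R ^+ p.+1 : rat) - G).
  rewrite /G -sumrB; apply: good_sum => // i.
  have -> : i%:R * poch a i ^+ p.+1 / i`!%:R ^+ p.+1 -
      i%:R * (p.+1%:R * (poch a i / i`!%:R) - p%:R)
      = i%:R * ((poch a i / i`!%:R) ^+ p.+1 - (p.+1%:R * (poch a i / i`!%:R) - p%:R)).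
    rewrite expr_div_n. ring.
  apply: (@good_mul0 p 3 _ _ hp); first exact: good_nat.
  apply: step3 => //; apply: xk_cong => //.
have H2 : G = poch (a + 2%:R) m.+1 / (m.+1)`!%:R - p%:R * \sum_(k < p) (k%:R : rat).
  have E : G = p.+1%:R * \sum_(k < p) (k%:R * poch a k / k`!%:R : rat)
               - p%:R * \sum_(k < p) (k%:R : rat).
    rewrite /G !mulr_sumr -sumrB; apply: eq_bigr => i _; ring.
  have SI := sum_id a m.+1.
  rewrite -hpm in SI.
  rewrite E SI /a. field.
  by rewrite pnatr_eq0 -lt0n fact_gt0 addrC natr1 pnatr_eq0.
rewrite -(subrK G (\sum_(k < p) _)).
apply: (@good_add p 3 _ _ hp) => //.
rewrite H2; exact: step5.
Qed.
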